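(* Let $\theta,\theta_1,\dots,\theta_k\in(0,\pi)$. Then $\sum_{i=1}^k\theta_i<\theta$ if and only if $\sin\big(\theta-\sum_{i\in I}\theta_i\big)>0$ for every subset $I\subseteq\{1,\dots,k\}$ (including $I=\emptyset$). *)

(* Defs.v *)
From mathcomp Require Import all_boot all_order all_algebra.
From mathcomp Require Import all_classical all_reals all_analysis.

(* Main.v *)
Require Import Defs.
From mathcomp Require Import all_boot all_order all_algebra.
From mathcomp Require Import all_classical all_reals all_analysis.
From mathcomp Require Import lra.
Import Order.TTheory GRing.Theory Num.Theory.
Local Open Scope ring_scope.

Lemma sin_le0_aux (R : realType) (x : R) : - pi < x <= 0 -> sin x <= 0.
Proof.
case/andP=> h1 h2.
have [->|hx] := eqVneq x 0; first by rewrite sin0.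
have hlt : x < 0 by rewrite lt_neqAle hx h2.
have : 0 < sin (- x) by apply: sin_gt0_pi; rewrite oppr_gt0 hlt /= ltrNl.
by rewrite sinN oppr_gt0 => /ltW.
Qed.

Lemma sum_set_ge0 (R : realType) (k : nat) (ths : 'I_k -> R) (I : {set 'I_k}) :
  (forall i, 0 < ths i < pi) -> 0 <= \sum_(i in I) ths i.
Proof. by move=> h; apply: sumr_ge0 => i _; case/andP: (h i) => /ltW. Qed.

(* indices {1..k} represented by 'I_k. *)
Theorem lemma2p1 (R : realType) (k : nat) (th : R) (ths : 'I_k -> R) :
  0 < th < pi ->
  (forall i, 0 < ths i < pi) ->
  (\sum_(i < k) ths i < th <->
   forall I : {set 'I_k}, 0 < sin (th - \sum_(i in I) ths i)).
Proof.
move=> /andP[th0 thpi] hths; split.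
- move=> hsum I; apply: sin_gt0_pi; apply/andP; split.
  + rewrite subr_gt0; apply: le_lt_trans hsum.
    rewrite [X in _ <= X](bigID (fun i => i \in I)) /= lerDl.
    by apply: sumr_ge0 => i _; case/andP: (hths i) => /ltW.
  + apply: le_lt_trans thpi; rewrite lerBlDr lerDl; exact: sum_set_ge0.
- move=> hsin.
  suff H : forall n (I : {set 'I_k}), #|I| = n -> \sum_(i in I) ths i < th.
    have := H _ [set: 'I_k] erefl.
    by under eq_bigl do rewrite finset.in_setT.
  elim=> [|n IH] I hI.
    have -> : I = finset.set0 by apply/eqP; rewrite -cards_eq0 hI.
    by rewrite finset.big_set0.
  have : (0 < #|I|)%N by rewrite hI.
  case/card_gt0P=> x xI.
  have hJ : #|I :\ x| = n by rewrite (cardsD1 x I) xI in hI; case: hI.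
  have hJlt := IH _ hJ.
  have hJge := @sum_set_ge0 R k ths (I :\ x) hths.
  have eq : \sum_(i in I) ths i = ths x + \sum_(i in I :\ x) ths i.
    rewrite (bigD1 x) //=; congr (_ + _); apply: eq_bigl => i.
    by rewrite finset.in_setD1 andbC.
  have := hsin I; rewrite eq => hs.
  rewrite -subr_gt0; rewrite ltNge; apply/negP => hle.
  have : sin (th - (ths x + \sum_(i in I :\ x) ths i)) <= 0.
    apply: sin_le0_aux; rewrite hle andbT.
    case/andP: (hths x) => _ hx.
    set S := \sum_(i in I :\ x) ths i in hJlt hJge *.
    clearbody S; move: hx hJlt hJge th0; clear; move=> hx hJlt hJge th0; lra.
  by rewrite leNgt hs.
Qed.
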